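(* \[ \sum_{n=1}^\infty\frac{a_n^2\,H_n^{(3)}}{2n-1}=\frac{2}{\pi}\Big(16G+4\pi-8\pi\log2-\zeta(3)-8\Big). \]
   Context: $a_n=\frac{1}{4^n}\binom{2n}{n}$; $H_n^{(3)}=\sum_{k=1}^n\frac{1}{k^3}$; $G=\sum_{k\ge0}\frac{(-1)^k}{(2k+1)^2}$ is Catalan's constant; $\zeta(3)=\sum_{k\ge1}k^{-3}$. *)

(* Defs.v *)
From Stdlib Require Import Reals.
From Coquelicot Require Import Coquelicot.
Open Scope R_scope.

Definition a_ (n : nat) : R := Binomial.C (2 * n) n / 4 ^ n.

Definition H3 (n : nat) : R := sum_n_m (fun k => / (INR k) ^ 3) 1 n.

Definition catalan : R := Series (fun k => (-1) ^ k / (2 * INR k + 1) ^ 2).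

(* zeta(3) = sum_{k>=1} 1/k^3 ; index shifted: term k is 1/(k+1)^3 *)
Definition zeta3 : R := Series (fun k => / (INR k + 1) ^ 3).

(* the summand of the series, n >= 1 (term 0 is set to 0) *)
Definition term (n : nat) : R :=
  match n with
  | O => 0
  | S _ => (a_ n) ^ 2 * H3 n / (2 * INR n - 1)
  end.

(* Main.v *)
Require Import Defs.
From Stdlib Require Import Reals Lra Lia Psatz.
From Coquelicot Require Import Coquelicot.
Open Scope R_scope.

Lemma a_0 : a_ 0 = 1.
Proof. unfold a_, Binomial.C. simpl. field. Qed.

Lemma a_S n : a_ (S n) = a_ n * (2 * INR n + 1) / (2 * INR n + 2).
Proof.
  unfold a_, Binomial.C.
  replace (2 * S n - S n)%nat with (S n) by lia.
  replace (2 * n - n)%nat with n by lia.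
  replace (2 * S n)%nat with (S (S (2 * n))) by lia.
  rewrite !fact_simpl. rewrite !mult_INR. rewrite !S_INR. rewrite mult_INR. simpl INR.
  assert (H1 := INR_fact_lt_0 n). assert (H2 := INR_fact_lt_0 (2*n)).
  assert (0 <= INR n) by apply pos_INR.
  assert (0 < 4 ^ n) by (apply pow_lt; lra). simpl pow. field; repeat split; lra.
Qed.

Lemma a_pos n : 0 < a_ n.
Proof.
  induction n. rewrite a_0; lra. rewrite a_S.
  assert (0 <= INR n) by apply pos_INR.
  apply Rdiv_lt_0_compat; [apply Rmult_lt_0_compat|]; lra.
Qed.

Lemma is_RInt_lin (f g : R -> R) a b If Ig al be :
  is_RInt f a b If -> is_RInt g a b Ig ->
  is_RInt (fun t => al * f t - be * g t) a b (al * If - be * Ig).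
Proof.
  intros Hf Hg.
  exact (is_RInt_minus _ _ a b _ _ (is_RInt_scal _ a b al _ Hf) (is_RInt_scal _ a b be _ Hg)).
Qed.

Lemma FTC (F f : R -> R) a b : a <= b ->
  (forall x, a <= x <= b -> is_derive F x (f x)) ->
  (forall x, a <= x <= b -> continuous f x) -> is_RInt f a b (F b - F a).
Proof.
  intros Hab HD HC.
  assert (Rmin a b = a) by (apply Rmin_left; lra).
  assert (Rmax a b = b) by (apply Rmax_right; lra).
  apply (is_RInt_derive F f a b); rewrite H, H0; assumption.
Qed.

Lemma RInt_unique_eq (f : R -> R) a b l1 l2 : is_RInt f a b l1 -> is_RInt f a b l2 -> l1 = l2.
Proof. intros H1 H2. pose proof (is_RInt_unique f a b l1 H1). pose proof (is_RInt_unique f a b l2 H2). congruence. Qed.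

Lemma cont_of_derive (f : R -> R) x : ex_derive f x -> continuous f x.
Proof. apply (ex_derive_continuous (K:=R_AbsRing) (V:=R_NormedModule)). Qed.

Lemma ex_RInt_cont (f : R -> R) a b :
  (forall z, Rmin a b <= z <= Rmax a b -> continuous f z) -> ex_RInt f a b.
Proof. apply (ex_RInt_continuous (V:=R_CompleteNormedModule)). Qed.

Lemma RInt_correct_R (f : R -> R) a b : ex_RInt f a b -> is_RInt f a b (RInt f a b).
Proof. apply (RInt_correct (V:=R_CompleteNormedModule)). Qed.

Lemma is_RInt_val (f : R -> R) a b (l1 l2 : R) : is_RInt f a b l1 -> l1 = l2 -> is_RInt f a b l2.
Proof. intros H ->; exact H. Qed.

Lemma cont_sinpow n x : continuous (fun t => sin t ^ n) x.
Proof. apply cont_of_derive. auto_derive. auto. Qed.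

Lemma ex_RInt_sinpow n a b : ex_RInt (fun t => sin t ^ n) a b.
Proof. apply ex_RInt_cont. intros; apply cont_sinpow. Qed.

Definition W n := RInt (fun t => sin t ^ n) 0 (PI/2).

Lemma W_rec n : INR (n+1) * W n - INR (n+2) * W (n+2) = 0.
Proof.
  assert (H0 : is_RInt (fun t => INR (n+1) * sin t ^ n - INR (n+2) * sin t ^ (n+2)) 0 (PI/2)
    ((fun t => sin t ^ (n+1) * cos t) (PI/2) - (fun t => sin t ^ (n+1) * cos t) 0)).
  { apply (FTC (fun t => sin t ^ (n+1) * cos t)). assert (PI2_RGT_0 := PI2_RGT_0). lra.
    - intros x _. auto_derive; auto.
      replace (n+2)%nat with (S (S n)) by lia. replace (n+1)%nat with (S n) by lia.
      simpl Init.Nat.pred. pose proof (sin2_cos2 x) as Hsc. unfold Rsqr in Hsc.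
      apply Rminus_diag_uniq.
      replace (_ - _) with (INR (S n) * sin x ^ n * (sin x * sin x + cos x * cos x - 1)) by (rewrite !S_INR; simpl pow; ring).
      rewrite Hsc. ring.
    - intros x _. apply cont_of_derive. auto_derive. auto. }
  simpl in H0. rewrite cos_PI2, sin_0 in H0.
  replace (sin (PI / 2) ^ (n + 1) * 0 - 0 ^ (n + 1) * cos 0) with 0 in H0
    by (replace (n+1)%nat with (S n) by lia; simpl; ring).
  symmetry. eapply RInt_unique_eq; [exact H0|].
  unfold W; apply is_RInt_lin; apply RInt_correct_R; apply ex_RInt_sinpow.
Qed.

Lemma W_0 : W 0 = PI/2.
Proof.
  unfold W. apply is_RInt_unique.
  replace (PI/2) with ((fun t => t) (PI/2) - (fun t => t) 0) at 2 by (simpl; ring).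
  apply (FTC (fun t => t)). pose proof PI2_RGT_0; lra.
  - intros x _. auto_derive; auto.
  - intros x _. apply cont_of_derive. auto_derive. auto.
Qed.

Lemma W_1 : W 1 = 1.
Proof.
  unfold W. apply is_RInt_unique.
  assert (H : is_RInt (fun t => sin t ^ 1) 0 (PI/2) ((fun t => - cos t) (PI/2) - (fun t => - cos t) 0)).
  { apply (FTC (fun t => - cos t)). pose proof PI2_RGT_0; lra.
  - intros x _. auto_derive; auto. ring.
  - intros x _. apply cont_sinpow. }
  apply (is_RInt_val _ _ _ _ _ H). simpl; rewrite cos_PI2, cos_0; ring.
Qed.

Lemma W_decr n : W (S n) <= W n.
Proof.
  unfold W. apply RInt_le. pose proof PI2_RGT_0; lra.
  apply ex_RInt_sinpow. apply ex_RInt_sinpow.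
  intros x Hx. simpl.
  assert (0 <= sin x) by (apply sin_ge_0; pose proof PI2_Rlt_PI; lra).
  assert (sin x <= 1) by apply SIN_bound.
  assert (0 <= sin x ^ n) by (apply pow_le; lra).
  nra.
Qed.

Lemma W_even n : W (2 * n) = PI / 2 * a_ n.
Proof.
  induction n. simpl. rewrite W_0, a_0. ring.
  replace (2 * S n)%nat with (2 * n + 2)%nat by lia.
  pose proof (W_rec (2*n)) as H. rewrite a_S.
  rewrite IHn in H. rewrite !plus_INR, mult_INR in H. simpl INR in H.
  assert (0 <= INR n) by apply pos_INR.
  apply (Rmult_eq_reg_l (2 * INR n + 2)). 2: lra.
  field_simplify; [|lra]. lra.
Qed.

Lemma W_odd n : W (2 * n + 1) = / ((2 * INR n + 1) * a_ n).
Proof.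
  induction n. simpl. rewrite W_1, a_0. field.
  replace (2 * S n + 1)%nat with (2 * n + 1 + 2)%nat by lia.
  pose proof (W_rec (2*n+1)) as H. rewrite a_S.
  rewrite IHn in H. rewrite !plus_INR, mult_INR in H. simpl INR in H.
  assert (0 <= INR n) by apply pos_INR. pose proof (a_pos n). rewrite S_INR.
  apply (Rmult_eq_reg_l (2 * INR n + 3)). 2: lra.
  transitivity ((2 * INR n + 2) * / ((2 * INR n + 1) * a_ n)). lra.
  field. split; lra.
Qed.

Lemma wallis_lo n : 2 / (PI * (2 * INR n + 1)) <= a_ n ^ 2.
Proof.
  pose proof (W_decr (2*n)) as H. replace (S (2*n)) with (2*n+1)%nat in H by lia.
  rewrite W_odd, W_even in H. pose proof (a_pos n). pose proof PI_RGT_0.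
  assert (0 <= INR n) by apply pos_INR.
  apply Rmult_le_reg_l with (PI * (2 * INR n + 1) * a_ n). 
  apply Rmult_lt_0_compat; [apply Rmult_lt_0_compat|]; lra.
  apply Rmult_le_compat_l with (r := (2 * INR n + 1) * a_ n) in H.
  2: apply Rmult_le_pos; lra.
  rewrite Rinv_r in H. 2: apply Rgt_not_eq; apply Rmult_lt_0_compat; lra.
  replace (PI * (2 * INR n + 1) * a_ n * (2 / (PI * (2 * INR n + 1)))) with (2 * a_ n) by (field; lra).
  nra.
Qed.

Lemma wallis_hi n : a_ (S n) ^ 2 <= / (PI * (INR n + 1)).
Proof.
  pose proof (W_decr (2*n+1)) as H. replace (S (2*n+1)) with (2*(S n))%nat in H by lia.
  rewrite W_odd, W_even in H. pose proof (a_pos n). pose proof (a_pos (S n)). pose proof PI_RGT_0.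
  assert (0 <= INR n) by apply pos_INR.
  assert (E : (2 * INR n + 1) * a_ n = (2 * INR n + 2) * a_ (S n)).
  { rewrite a_S. field. lra. }
  rewrite E in H.
  apply Rmult_le_compat_l with (r := (2 * INR n + 2) * a_ (S n)) in H.
  2: apply Rmult_le_pos; lra.
  rewrite Rinv_r in H. 2: apply Rgt_not_eq; apply Rmult_lt_0_compat; lra.
  apply Rmult_le_reg_l with (PI * (INR n + 1)). apply Rmult_lt_0_compat; lra.
  rewrite Rinv_r. 2: apply Rgt_not_eq; apply Rmult_lt_0_compat; lra.
  nra.
Qed.

Lemma lim_inv_lin c d : 0 < c -> 0 < d -> is_lim_seq (fun N => / (c * INR N + d)) 0.
Proof.
  intros Hc Hd.
  assert (H : is_lim_seq (fun N => c * INR N + d) p_infty).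
  { apply is_lim_seq_le_p_loc with (fun N => c * INR N).
    exists 0%nat. intros; lra.
    pose proof (is_lim_seq_scal_l INR c p_infty is_lim_seq_INR) as H.
    simpl in H. destruct (Rle_dec 0 c) as [h|h]; [|lra].
    destruct (Rle_lt_or_eq_dec 0 c h) as [h'|h']; [|lra]. exact H. }
  pose proof (is_lim_seq_inv _ _ H) as H2. simpl in H2. apply H2. discriminate.
Qed.

Definition g N := 4 * INR N ^ 2 * a_ N ^ 2 / (2 * INR N - 1).

Lemma g_lim : is_lim_seq (fun N => g (S N)) (2 / PI).
Proof.
  pose proof PI_RGT_0.
  apply is_lim_seq_le_le with (fun _ => 2 / PI) (fun N => 2/PI + 2/PI * / (2 * INR N + 1)).
  - intro N. unfold g. rewrite S_INR. pose proof (wallis_lo (S N)) as L. pose proof (wallis_hi N) as U.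
    rewrite S_INR in L. assert (0 <= INR N) by apply pos_INR.
    split.
    + apply Rmult_le_reg_r with (2 * (INR N + 1) - 1). lra.
      unfold Rdiv at 2. rewrite Rmult_assoc, Rinv_l, Rmult_1_r by lra.
      apply Rle_trans with (4 * (INR N + 1) ^ 2 * (2 / (PI * (2 * (INR N + 1) + 1)))).
      2: { apply Rmult_le_compat_l. nra. exact L. }
      apply Rmult_le_reg_r with (PI * (2 * (INR N + 1) + 1)). apply Rmult_lt_0_compat; lra.
      replace (2 / PI * (2 * (INR N + 1) - 1) * (PI * (2 * (INR N + 1) + 1))) with (2 * (2 * (INR N+1) - 1) * (2*(INR N+1)+1)) by (field; lra).
      replace (4 * (INR N + 1) ^ 2 * (2 / (PI * (2 * (INR N + 1) + 1))) * (PI * (2 * (INR N + 1) + 1))) with (8 * (INR N+1)^2) by (field; lra).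
      nra.
    + apply Rmult_le_reg_r with (2 * (INR N + 1) - 1). lra.
      replace (4 * (INR N + 1) ^ 2 * a_ (S N) ^ 2 / (2 * (INR N + 1) - 1) * (2 * (INR N + 1) - 1)) with (4 * (INR N + 1) ^ 2 * a_ (S N) ^ 2) by (field; lra).
      apply Rle_trans with (4 * (INR N + 1) ^ 2 * / (PI * (INR N + 1))).
      { apply Rmult_le_compat_l. nra. exact U. }
      right. field. lra.
  - apply is_lim_seq_const.
  - replace (2 / PI) with (2 / PI + 2 / PI * 0) at 1 by ring.
    apply is_lim_seq_plus'. apply is_lim_seq_const.
    apply is_lim_seq_mult'. apply is_lim_seq_const. apply lim_inv_lin; lra.
Qed.

Lemma a_lim : is_lim_seq a_ 0.
Proof.
  apply is_lim_seq_incr_1.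
  apply is_lim_seq_le_le with (fun _ => 0) (fun N => sqrt (/ (1 * INR N + 1))).
  - intro N. pose proof (a_pos (S N)). split. lra.
    rewrite <- (sqrt_pow2 (a_ (S N))) by lra. apply sqrt_le_1_alt.
    pose proof (wallis_hi N). pose proof PI_RGT_0. pose proof (pos_INR N).
    apply Rle_trans with (1 := H0). apply Rinv_le_contravar. lra.
    assert (3 <= PI) by (pose proof PI2_3_2 ; lra). nra.
  - apply is_lim_seq_const.
  - rewrite <- sqrt_0. apply is_lim_seq_continuous. apply continuity_pt_sqrt. lra.
    apply lim_inv_lin; lra.
Qed.

Definition B N : R := sum_n_m (fun n => a_ n ^ 2 / INR n) 1 N.

Lemma g_step m : g (S m) - g (S (S m)) = a_ (S m) ^ 2 / (2 * INR (S m) - 1).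
Proof.
  unfold g. rewrite (a_S (S m)). rewrite !S_INR. pose proof (pos_INR m).
  field. lra.
Qed.

Lemma g_1 : g 1 = 1.
Proof. unfold g. rewrite (a_S 0), a_0. simpl. field. Qed.

Lemma sum_H1 (f : nat -> R) N : sum_n_m f 1 (S N) = sum_n_m f 1 N + f (S N).
Proof. rewrite sum_n_Sm by lia. reflexivity. Qed.

Lemma sum_n_m_empty (f : nat -> R) : sum_n_m f 1 0 = 0.
Proof. rewrite sum_n_m_zero by lia. reflexivity. Qed.

Lemma sum_term_eq N : sum_n term N = 8 * (1 - g (S N)) - 4 * B N - g (S N) * H3 N.
Proof.
  induction N.
  - rewrite sum_O. unfold B, H3. rewrite !sum_n_m_empty, g_1. simpl. ring.
  - rewrite sum_Sn. change (plus (sum_n term N) (term (S N))) with (sum_n term N + term (S N)).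
    change (term (S N)) with (a_ (S N) ^ 2 * H3 (S N) / (2 * INR (S N) - 1)).
    rewrite IHN. unfold B, H3. rewrite !sum_H1. fold (B N). fold (H3 N).
    pose proof (g_step N) as E.
    assert (g (S (S N)) = g (S N) - a_ (S N) ^ 2 / (2 * INR (S N) - 1)) as E2 by lra.
    rewrite E2. unfold g. rewrite !S_INR. pose proof (pos_INR N).
    match goal with |- ?x = ?y => change (@eq R x y) end. field. lra.
Qed.

Lemma is_series_of_lim (a : nat -> R) (l : R) : is_lim_seq (sum_n a) l -> is_series a l.
Proof. intro H; exact H. Qed.

Lemma tele_series : is_series (fun k => 2 * (/ (INR k + 1) - / (INR k + 2))) 2.
Proof.
  apply is_series_of_lim.
  apply is_lim_seq_ext with (fun N => 2 - 2 * / (1 * INR N + 2)).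
  - intro N. induction N.
    + rewrite sum_O. simpl. field.
    + rewrite sum_Sn. change (plus ?x ?y) with (x + y). rewrite <- IHN. rewrite S_INR.
      pose proof (pos_INR N). field. lra.
  - replace 2 with (2 - 2 * 0) at 1 by ring.
    apply is_lim_seq_minus'. apply is_lim_seq_const. apply is_lim_seq_mult'. apply is_lim_seq_const.
    apply lim_inv_lin; lra.
Qed.

Lemma zeta3_ex : ex_series (fun k => / (INR k + 1) ^ 3).
Proof.
  apply (ex_series_le (K:=R_AbsRing) (V:=R_CompleteNormedModule) _ (fun k => 2 * (/ (INR k + 1) - / (INR k + 2)))).
  - intro n. change (norm ?x) with (Rabs x). pose proof (pos_INR n).
    rewrite Rabs_pos_eq. 2: { apply Rlt_le, Rinv_0_lt_compat. apply pow_lt. lra. }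
    replace (2 * (/ (INR n + 1) - / (INR n + 2))) with (/ (INR n + 1) ^ 3 * (2 * (INR n + 1) ^ 2 / (INR n + 2))) by (field; lra).
    rewrite <- (Rmult_1_r (/ (INR n + 1) ^ 3)) at 1.
    apply Rmult_le_compat_l. apply Rlt_le, Rinv_0_lt_compat. apply pow_lt. lra.
    apply (Rmult_le_reg_r (INR n + 2)). lra.
    unfold Rdiv. rewrite Rmult_assoc, Rinv_l by lra. nra.
  - exists 2. apply tele_series.
Qed.

Lemma H3_lim : is_lim_seq H3 zeta3.
Proof.
  apply is_lim_seq_incr_1.
  apply is_lim_seq_ext with (sum_n (fun k => / (INR k + 1) ^ 3)).
  - intro N. unfold H3, sum_n. rewrite <- sum_n_m_S. apply sum_n_m_ext. intro k. rewrite S_INR. reflexivity.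
  - apply (Series_correct _ zeta3_ex).
Qed.

Ltac Rfix := match goal with |- ?x = ?y => change (@eq R x y) end.

Lemma is_derive_val (f : R -> R) x l1 l2 : is_derive f x l1 -> l1 = l2 -> is_derive f x l2.
Proof. intros H ->; exact H. Qed.

Lemma is_derive_sub (f g : R -> R) x df dg :
  is_derive f x df -> is_derive g x dg -> is_derive (fun t => f t - g t) x (df - dg).
Proof. intros Hf Hg. exact (is_derive_minus f g x df dg Hf Hg). Qed.

Lemma is_RInt_add (f g : R -> R) a b If Ig :
  is_RInt f a b If -> is_RInt g a b Ig -> is_RInt (fun t => f t + g t) a b (If + Ig).
Proof. intros Hf Hg. exact (is_RInt_plus _ _ a b _ _ Hf Hg). Qed.

Lemma is_RInt_mulc (f : R -> R) a b If k :
  is_RInt f a b If -> is_RInt (fun t => k * f t) a b (k * If).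
Proof. intros Hf. exact (is_RInt_scal _ a b k _ Hf). Qed.

Lemma is_RInt_zero a b : is_RInt (fun _ => 0) a b 0.
Proof. apply (is_RInt_val _ _ _ _ _ (is_RInt_const a b 0)). change (scal (b - a) 0) with ((b-a)*0). Rfix. ring. Qed.

Lemma term_int_gen e : is_RInt (fun t => (PI/2 - t) * sin t ^ e * cos t - / INR (S e) * sin t ^ (S e)) 0 (PI/2) 0.
Proof.
  pose proof PI_RGT_0 as Hpi. pose proof (pos_INR e).
  assert (H1 : is_RInt (fun t => (PI/2 - t) * sin t ^ e * cos t - / INR (S e) * sin t ^ (S e)) 0 (PI/2)
    ((fun t => (PI/2 - t) * sin t ^ (S e) / INR (S e)) (PI/2) - (fun t => (PI/2 - t) * sin t ^ (S e) / INR (S e)) 0)).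
  { apply (FTC (fun t => (PI/2 - t) * sin t ^ (S e) / INR (S e))). lra.
    - intros x _. auto_derive. auto. simpl Init.Nat.pred. change (match e with 0%nat => 1 | S _ => INR e + 1 end) with (INR (S e)). rewrite S_INR. Rfix. change (sin x ^ S e) with (sin x * sin x ^ e). field. lra.
    - intros x _. apply cont_of_derive. auto_derive. auto. }
  apply (is_RInt_val _ _ _ _ _ H1). cbv beta. rewrite sin_0. rewrite pow_i by lia. rewrite S_INR. Rfix. field. lra.
Qed.

Lemma term_int m : is_RInt (fun t => (PI/2 - t) * sin t ^ (2*m+1) * cos t) 0 (PI/2)
   (PI/4 * (a_ (S m) / INR (S m))).
Proof.
  pose proof PI_RGT_0 as Hpi. pose proof (pos_INR m).
  pose proof (term_int_gen (2*m+1)) as H1.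
  assert (H2 : is_RInt (fun t => / INR (S (2*m+1)) * sin t ^ (S (2*m+1))) 0 (PI/2) (/ INR (S (2*m+1)) * W (2 * S m))).
  { apply is_RInt_mulc. replace (S (2*m+1))%nat with (2 * S m)%nat by lia. apply RInt_correct_R, ex_RInt_sinpow. }
  pose proof (is_RInt_add _ _ _ _ _ _ H1 H2) as H3.
  eapply is_RInt_ext; [|eapply is_RInt_val; [exact H3|]].
  - intros x _. simpl. ring.
  - rewrite W_even. replace (S (2*m+1)) with (2 * S m)%nat by lia.
    rewrite mult_INR. rewrite (S_INR m). change (INR 2) with (1+1). field. lra.
Qed.

Lemma pow_odd_split x N : x ^ (2 * N + 1) = x * (x ^ 2) ^ N.
Proof. rewrite pow_add, <- pow_mult. ring. Qed.

Fixpoint Phi (N : nat) (t : R) : R :=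
  match N with
  | O => 0
  | S M => Phi M t + a_ (S M) * ((PI/2 - t) * sin t ^ (2*M+1) * cos t)
  end.

Lemma Phi_int N : is_RInt (Phi N) 0 (PI/2) (PI/4 * B N).
Proof.
  induction N.
  - unfold B. rewrite sum_n_m_empty. apply (is_RInt_val _ _ _ _ _ (is_RInt_zero _ _)). ring.
  - pose proof (is_RInt_add _ _ _ _ _ _ IHN (is_RInt_mulc _ _ _ _ (a_ (S N)) (term_int N))) as H.
    eapply is_RInt_ext; [|eapply is_RInt_val; [exact H|]].
    + intros x _. reflexivity.
    + unfold B. rewrite sum_H1. set (s := sum_n_m _ _ _). Rfix. unfold Rdiv. ring.
Qed.

Fixpoint P (N : nat) (x : R) : R :=
  match N with
  | O => 1
  | S M => P M x + a_ (S M) * x ^ (S M)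
  end.

Definition D N t := 1 - cos t * P N (sin t ^ 2).

Lemma D_deriv N t : is_derive (D N) t ((2 * INR N + 1) * a_ N * sin t ^ (2*N+1)).
Proof.
  induction N.
  - unfold D. simpl P. auto_derive; auto. rewrite a_0. Rfix. simpl. ring.
  - apply (is_derive_ext (fun t => D N t - cos t * (a_ (S N) * (sin t ^ 2) ^ (S N)))).
    { intro u. unfold D. change (P (S N) (sin u ^ 2)) with (P N (sin u ^ 2) + a_ (S N) * (sin u ^ 2) ^ (S N)). Rfix. ring. }
    eapply is_derive_val. apply (is_derive_sub (D N)). exact IHN. auto_derive. auto. reflexivity.
    change (match N with 0%nat => 1 | S _ => INR N + 1 end) with (INR (S N)).
    change (sin t * (sin t * 1)) with (sin t ^ 2).
    rewrite (pow_odd_split (sin t) N), (pow_odd_split (sin t) (S N)).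
    rewrite a_S. rewrite !S_INR. pose proof (pos_INR N).
    pose proof (sin2_cos2 t) as Hsc. unfold Rsqr in Hsc.
    apply Rminus_diag_uniq.
    replace (_ - _) with (- (2 * INR N + 1) * a_ N * sin t * (sin t ^ 2) ^ N * (sin t * sin t + cos t * cos t - 1)).
    rewrite Hsc. ring.
    simpl pow. field. lra.
Qed.

Lemma cpt_of_derive (f : R -> R) x l : is_derive f x l -> continuity_pt f x.
Proof. intro H. apply continuity_pt_filterlim. apply cont_of_derive. exists l. exact H. Qed.

Lemma mono_from_deriv (f df : R -> R) t : 0 <= t ->
  (forall x, 0 <= x <= t -> is_derive f x (df x)) ->
  (forall x, 0 <= x <= t -> 0 <= df x) -> f 0 <= f t.
Proof.
  intros Ht HD Hp.
  destruct (MVT_gen f 0 t df) as [c [Hc E]].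
  - intros x Hx. apply HD. rewrite Rmin_left, Rmax_right in Hx by lra. lra.
  - intros x Hx. rewrite Rmin_left, Rmax_right in Hx by lra. apply (cpt_of_derive f x (df x)). apply HD; lra.
  - rewrite Rmin_left, Rmax_right in Hc by lra. pose proof (Hp c Hc). nra.
Qed.

Lemma P_0 N : P N 0 = 1.
Proof. induction N. reflexivity. simpl P. rewrite IHN. simpl pow. ring. Qed.

Lemma D_0 N : D N 0 = 0.
Proof. unfold D. rewrite sin_0, cos_0. rewrite pow_i by lia. rewrite P_0. ring. Qed.

Lemma D_nonneg N t : 0 <= t <= PI/2 -> 0 <= D N t.
Proof.
  intros Ht. rewrite <- (D_0 N).
  apply (mono_from_deriv (D N) (fun x => (2 * INR N + 1) * a_ N * sin x ^ (2*N+1))). lra.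
  - intros x _. apply D_deriv.
  - intros x Hx. pose proof (pos_INR N). pose proof (a_pos N).
    assert (0 <= sin x) by (apply sin_ge_0; pose proof PI2_Rlt_PI; lra).
    apply Rmult_le_pos. apply Rmult_le_pos; lra. apply pow_le; lra.
Qed.

Lemma U_deriv N x : 0 < cos x ->
  is_derive (fun t => a_ N * sin t ^ (2*N+2) / cos t) x
    (a_ N * sin x ^ (2*N+1) * ((2 * INR N + 2) + sin x ^ 2 / cos x ^ 2)).
Proof.
  intro Hc. auto_derive. lra.
  replace (N + (N + 0) + 2)%nat with (S (2*N+1)) by lia. simpl Init.Nat.pred.
  change (sin x ^ S (2 * N + 1)) with (sin x * sin x ^ (2*N+1)).
  rewrite S_INR, plus_INR, mult_INR. change (INR 2) with (1+1). change (INR 1) with 1. replace (N + (N + 0) + 1)%nat with (2*N+1)%nat by lia. Rfix. field. lra.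
Qed.

Lemma D_upper N t : 0 <= t < PI/2 -> D N t <= a_ N * sin t ^ (2*N+2) / cos t.
Proof.
  intros Ht.
  assert (Hcos : forall x, 0 <= x <= t -> 0 < cos x).
  { intros x Hx. apply cos_gt_0; pose proof PI2_RGT_0; lra. }
  assert (H := mono_from_deriv (fun u => a_ N * sin u ^ (2*N+2) / cos u - D N u)
     (fun x => a_ N * sin x ^ (2*N+1) * ((2 * INR N + 2) + sin x ^ 2 / cos x ^ 2)
            - (2 * INR N + 1) * a_ N * sin x ^ (2*N+1)) t).
  cbv beta in H. rewrite D_0, sin_0, cos_0, pow_i in H by lia.
  cut (a_ N * 0 / 1 - 0 <= a_ N * sin t ^ (2 * N + 2) / cos t - D N t). { unfold Rdiv; rewrite Rmult_0_r, Rmult_0_l; lra. }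
  apply H; clear H. lra.
  - intros x Hx. apply is_derive_sub. apply U_deriv. apply Hcos; lra. apply D_deriv.
  - intros x Hx. pose proof (pos_INR N). pose proof (a_pos N). pose proof (Hcos x Hx).
    assert (0 <= sin x) by (apply sin_ge_0; pose proof PI2_Rlt_PI; lra).
    assert (0 <= sin x ^ (2*N+1)) by (apply pow_le; lra).
    assert (0 <= sin x ^ 2 / cos x ^ 2) by (apply Rle_div_r ; [apply pow_lt; lra|]; rewrite Rmult_0_l; apply pow_le; lra).
    replace (a_ N * sin x ^ (2*N+1) * ((2 * INR N + 2) + sin x ^ 2 / cos x ^ 2)
            - (2 * INR N + 1) * a_ N * sin x ^ (2*N+1)) with
      (a_ N * sin x ^ (2*N+1) * (1 + sin x ^ 2 / cos x ^ 2)) by ring.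
    apply Rmult_le_pos. apply Rmult_le_pos; lra. lra.
Qed.

Lemma sin_ge_third u : 0 <= u <= 2 -> u / 3 <= sin u.
Proof.
  intros Hu. assert (PI2_3_2 := PI2_3_2). assert (PI_4 := PI_4).
  destruct (Rle_dec u PI) as [h|h]; [|lra].
  destruct (SIN u) as [H _]; try lra.
  eapply Rle_trans; [|exact H].
  assert (E : sin_lb u = u * (1 - (u*u)/6 + (u*u)*(u*u)/120 - (u*u)*(u*u)*(u*u)/5040))
    by (unfold sin_lb, sin_approx, sin_term; simpl; field).
  rewrite E.
  assert (0 <= u*u <= 4) by nra.
  set (v := u*u) in *.
  assert (0 <= v*v*(42 - v)) by (apply Rmult_le_pos; nra).
  nra.
Qed.

Definition Phiinf t := (PI/2 - t) * (sin (t/2) / cos (t/2)).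

Lemma Phi_sin N t : sin t * Phi N t = (PI/2 - t) * cos t * (P N (sin t ^ 2) - 1).
Proof.
  induction N.
  - simpl. ring.
  - change (Phi (S N) t) with (Phi N t + a_ (S N) * ((PI/2 - t) * sin t ^ (2*N+1) * cos t)).
    change (P (S N) (sin t ^ 2)) with (P N (sin t ^ 2) + a_ (S N) * (sin t ^ 2) ^ (S N)).
    rewrite pow_odd_split. change ((sin t ^ 2) ^ S N) with (sin t ^ 2 * (sin t ^ 2) ^ N).
    rewrite Rmult_plus_distr_l, IHN. ring.
Qed.

Lemma half_tan t : 0 < t < PI -> sin (t/2) / cos (t/2) = (1 - cos t) / sin t.
Proof.
  intros Ht.
  assert (0 < cos (t/2)) by (apply cos_gt_0; lra).
  assert (0 < sin t) by (apply sin_gt_0; lra).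
  assert (Hs : sin t = 2 * sin (t/2) * cos (t/2)) by (rewrite <- sin_2a; f_equal; field).
  assert (Hc : cos t = 1 - 2 * sin (t/2) * sin (t/2)) by (rewrite <- cos_2a_sin; f_equal; field).
  assert (0 < sin (t/2)) by (apply sin_gt_0; lra).
  rewrite Hs, Hc. field. lra.
Qed.

Lemma Phi_bounds N t : 0 < t < PI/2 -> 0 <= Phiinf t - Phi N t <= 3 * a_ N.
Proof.
  intros Ht. pose proof PI2_Rlt_PI.
  assert (Hs : 0 < sin t) by (apply sin_gt_0; lra).
  assert (Hc : 0 < cos t) by (apply cos_gt_0; lra).
  assert (E : Phiinf t - Phi N t = (PI/2 - t) * D N t / sin t).
  { unfold Phiinf. rewrite half_tan by lra.
    apply (Rmult_eq_reg_l (sin t)); [|lra].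
    rewrite Rmult_minus_distr_l, Phi_sin. unfold D. field. lra. }
  rewrite E. pose proof (D_nonneg N t (conj (Rlt_le _ _ (proj1 Ht)) (Rlt_le _ _ (proj2 Ht)))).
  pose proof (D_upper N t (conj (Rlt_le _ _ (proj1 Ht)) (proj2 Ht))).
  split.
  - apply Rle_div_r. lra. rewrite Rmult_0_l. apply Rmult_le_pos; lra.
  - assert (H3 : PI/2 - t <= 3 * cos t).
    { rewrite <- sin_shift. pose proof (sin_ge_third (PI/2 - t)). pose proof PI_4. lra. }
    assert (Hp : sin t ^ (2*N+1) <= 1).
    { rewrite <- (pow1 (2*N+1)). apply pow_incr. split. lra. apply SIN_bound. }
    assert (Hp0 : 0 <= sin t ^ (2*N+1)) by (apply pow_le; lra).
    pose proof (a_pos N).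
    apply Rle_trans with ((PI/2 - t) * (a_ N * sin t ^ (2*N+2) / cos t) / sin t).
    + unfold Rdiv. apply Rmult_le_compat_r. apply Rlt_le, Rinv_0_lt_compat; lra.
      apply Rmult_le_compat_l; lra.
    + replace ((PI/2 - t) * (a_ N * sin t ^ (2*N+2) / cos t) / sin t)
        with (a_ N * sin t ^ (2*N+1) * ((PI/2 - t) / cos t)).
      2: { replace (2*N+2)%nat with (S (2*N+1)) by lia. simpl pow. field. lra. }
      assert ((PI/2 - t) / cos t <= 3) by (apply Rle_div_l; lra).
      assert (0 <= (PI/2 - t) / cos t) by (apply Rle_div_r; lra).
      apply Rle_trans with (a_ N * 1 * 3). 2: lra.
      apply Rmult_le_compat. apply Rmult_le_pos; lra. lra.
      apply Rmult_le_compat_l; lra. lra.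
Qed.

Lemma Phiinf_cont t : 0 <= t <= PI/2 -> continuous Phiinf t.
Proof.
  intros Ht. apply cont_of_derive. unfold Phiinf. auto_derive.
  assert (0 < cos (t/2)) by (apply cos_gt_0; pose proof PI2_Rlt_PI; lra). lra.
Qed.

Lemma ex_RInt_Phiinf : ex_RInt Phiinf 0 (PI/2).
Proof.
  apply ex_RInt_cont. intros z Hz. rewrite Rmin_left, Rmax_right in Hz by (pose proof PI2_RGT_0; lra).
  apply Phiinf_cont; lra.
Qed.

Lemma B_lim_K : is_lim_seq B (4 / PI * RInt Phiinf 0 (PI/2)).
Proof.
  pose proof PI_RGT_0 as Hpi. pose proof PI2_RGT_0.
  set (K := RInt Phiinf 0 (PI/2)).
  assert (HB : forall N, B N = 4 / PI * RInt (Phi N) 0 (PI/2)).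
  { intro N. rewrite (is_RInt_unique _ _ _ _ (Phi_int N)). field. lra. }
  assert (HexN : forall N, ex_RInt (Phi N) 0 (PI/2)) by (intro N; eexists; apply Phi_int).
  apply is_lim_seq_le_le with (fun N => 4 / PI * K - 6 * a_ N) (fun _ => 4 / PI * K).
  - intro N. rewrite HB. split.
    + assert (H1 : K <= RInt (fun t => Phi N t + 3 * a_ N) 0 (PI/2)).
      { apply RInt_le. lra. apply ex_RInt_Phiinf.
        eexists. apply is_RInt_add. apply Phi_int. apply (is_RInt_val _ _ _ _ _ (is_RInt_const _ _ _)). reflexivity.
        intros x Hx. pose proof (Phi_bounds N x Hx). lra. }
      rewrite (is_RInt_unique _ _ _ _ (is_RInt_add _ _ _ _ _ _ (RInt_correct_R _ _ _ (HexN N))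
          (is_RInt_val _ _ _ _ ((PI/2 - 0) * (3 * a_ N)) (is_RInt_const 0 (PI/2) (3 * a_ N)) eq_refl))) in H1.
      apply Rmult_le_compat_l with (r := 4 / PI) in H1. 2: apply Rlt_le, Rdiv_lt_0_compat; lra.
      replace (4 / PI * (RInt (Phi N) 0 (PI / 2) + (PI / 2 - 0) * (3 * a_ N))) with
        (4 / PI * RInt (Phi N) 0 (PI / 2) + 6 * a_ N) in H1 by (field; lra).
      lra.
    + apply Rmult_le_compat_l. apply Rlt_le, Rdiv_lt_0_compat; lra.
      apply RInt_le. lra. apply HexN. apply ex_RInt_Phiinf.
      intros x Hx. pose proof (Phi_bounds N x Hx). lra.
  - replace (4 / PI * K) with (4 / PI * K - 6 * 0) at 1 by ring.
    apply is_lim_seq_minus'. apply is_lim_seq_const. apply is_lim_seq_mult'. apply is_lim_seq_const. apply a_lim.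
  - apply is_lim_seq_const.
Qed.

Definition q (u : R) : R := if Req_EM_T u 0 then 1 else atan u / u.

Lemma q_cont0 : continuous q 0.
Proof.
  apply continuity_pt_filterlim.
  unfold continuity_pt, continue_in, limit1_in, limit_in. intros eps Heps.
  destruct (derivable_pt_lim_atan 0 eps Heps) as [del Hdel].
  exists del. split. apply cond_pos. intros x [[_ Hx0] Hxd]. simpl in Hxd |- *.
  unfold q. destruct (Req_EM_T 0 0) as [_|h]; [|lra].
  destruct (Req_EM_T x 0) as [h|h]. { subst. exfalso. apply Hx0. reflexivity. }
  unfold Rdist in *. rewrite Rminus_0_r in Hxd.
  specialize (Hdel x h Hxd). rewrite Rplus_0_l, atan_0, Rminus_0_r in Hdel.
  replace (/ (1 + 0 ^ 2)) with 1 in Hdel by (simpl; field). exact Hdel.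
Qed.

Lemma q_cont z : continuous q z.
Proof.
  destruct (Req_EM_T z 0) as [->|hz]. apply q_cont0.
  refine (continuous_ext_loc q (fun y : R => atan y / y) z _ _).
  - assert (Hp : 0 < Rabs z) by (apply Rabs_pos_lt; exact hz).
    exists (mkposreal _ Hp). intros y Hy. unfold q.
    destruct (Req_EM_T y 0) as [->|hy]; [|reflexivity].
    exfalso. change (Rabs (0 - z) < Rabs z) in Hy. rewrite Rminus_0_l, Rabs_Ropp in Hy. lra.
  - apply cont_of_derive. auto_derive. exact hz.
Qed.

Lemma powd k u : is_derive (fun x => x * (x ^ 2) ^ k) u ((2 * INR k + 1) * (u ^ 2) ^ k).
Proof.
  auto_derive. auto. destruct k.
  - simpl. Rfix. ring.
  - simpl Init.Nat.pred. rewrite S_INR. Rfix. simpl pow. ring.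
Qed.

Fixpoint AT N u := match N with
  | O => u
  | S M => AT M u + (-1) ^ (S M) * (u * (u ^ 2) ^ (S M)) / (2 * INR (S M) + 1) end.
Fixpoint ATd N u := match N with
  | O => 1
  | S M => ATd M u + (-1) ^ (S M) * (u ^ 2) ^ (S M) end.
Fixpoint QN N u := match N with
  | O => 1
  | S M => QN M u + (-1) ^ (S M) * (u ^ 2) ^ (S M) / (2 * INR (S M) + 1) end.

Lemma AT_deriv N u : is_derive (AT N) u (ATd N u).
Proof.
  induction N.
  - simpl. apply (is_derive_ext (fun x => x)). reflexivity. auto_derive; auto.
  - apply (is_derive_ext (fun x => AT N x + ((-1) ^ (S N) / (2 * INR (S N) + 1)) * (x * (x ^ 2) ^ (S N)))).
    { intro t. change (AT (S N) t) with (AT N t + (-1) ^ (S N) * (t * (t ^ 2) ^ (S N)) / (2 * INR (S N) + 1)). Rfix. unfold Rdiv. ring. }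
    pose proof (pos_INR N).
    eapply is_derive_val. apply (is_derive_plus (AT N)). exact IHN.
    apply (is_derive_scal (fun x => x * (x ^ 2) ^ (S N))). apply powd.
    change (ATd (S N) u) with (ATd N u + (-1) ^ (S N) * (u ^ 2) ^ (S N)). change (plus ?a ?b) with (a + b). change (scal ?a ?b) with (a * b). Rfix. field. rewrite S_INR. lra.
Qed.

Lemma ATd_geom N u : ATd N u * (1 + u ^ 2) = 1 - (-1) ^ (S N) * (u ^ 2) ^ (S N).
Proof.
  induction N.
  - simpl. ring.
  - simpl ATd. rewrite Rmult_plus_distr_r, IHN. simpl pow. ring.
Qed.

Lemma AT_QN N u : AT N u = u * QN N u.
Proof. induction N. simpl. ring. change (AT (S N) u) with (AT N u + (-1) ^ (S N) * (u * (u ^ 2) ^ (S N)) / (2 * INR (S N) + 1)). change (QN (S N) u) with (QN N u + (-1) ^ (S N) * (u ^ 2) ^ (S N) / (2 * INR (S N) + 1)). rewrite IHN. field. rewrite S_INR. pose proof (pos_INR N). lra. Qed.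

Lemma atan_deriv u : is_derive atan u (/ (1 + u ^ 2)).
Proof. apply is_derive_Reals. apply derivable_pt_lim_atan. Qed.

Lemma AT_err N u : 0 <= u <= 1 -> Rabs (atan u - AT N u) <= u * (u ^ 2) ^ (S N) / (2 * INR (S N) + 1).
Proof.
  intros Hu. pose proof (pos_INR N).
  assert (Hsign : forall x, Rabs ((-1) ^ (S N) / (1 + x ^ 2)) <= 1).
  { intro x. unfold Rdiv. rewrite Rabs_mult, pow_1_abs, Rmult_1_l.
    assert (0 <= x^2) by (apply pow2_ge_0). rewrite Rabs_pos_eq.
    rewrite <- Rinv_1. apply Rinv_le_contravar; lra. apply Rlt_le, Rinv_0_lt_compat. lra. }
  assert (Hdf : forall x, /(1 + x ^ 2) - ATd N x = (-1) ^ (S N) / (1 + x ^ 2) * (x ^ 2) ^ (S N)).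
  { intro x. assert (0 <= x^2) by (apply pow2_ge_0).
    apply (Rmult_eq_reg_r (1 + x ^ 2)); [|lra].
    rewrite Rmult_minus_distr_r, ATd_geom. field. lra. }
  assert (Hd : forall s : R, forall x, 0 <= x <= u ->
     is_derive (fun x => x * (x ^ 2) ^ (S N) / (2 * INR (S N) + 1) + s * (atan x - AT N x)) x
       ((x ^ 2) ^ (S N) * (1 + s * ((-1) ^ (S N) / (1 + x ^ 2))))).
  { intros s x _. eapply is_derive_val.
    apply (is_derive_plus (fun x => x * (x ^ 2) ^ (S N) / (2 * INR (S N) + 1)) (fun x => s * (atan x - AT N x))).
    apply (is_derive_ext (fun x => / (2 * INR (S N) + 1) * (x * (x ^ 2) ^ (S N)))).
    { intro t. Rfix. unfold Rdiv. ring. }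
    apply (is_derive_scal (fun x => x * (x ^ 2) ^ (S N))). apply powd.
    apply (is_derive_scal (fun x => atan x - AT N x)). apply is_derive_sub. apply atan_deriv. apply AT_deriv.
    change (plus ?a ?b) with (a + b). change (scal ?a ?b) with (a * b). rewrite Hdf. Rfix. pose proof (pow2_ge_0 x). field. rewrite S_INR. split; lra. }
  assert (Hpos : forall s, -1 <= s <= 1 -> forall x, 0 <= x <= u -> 0 <= (x ^ 2) ^ (S N) * (1 + s * ((-1) ^ (S N) / (1 + x ^ 2)))).
  { intros s Hs x _. apply Rmult_le_pos. apply pow_le, pow2_ge_0.
    pose proof (Hsign x). apply Rabs_le_between in H0.
    destruct (Rle_dec 0 s). nra. nra. }
  pose proof (mono_from_deriv _ _ u (proj1 Hu) (Hd 1) (Hpos 1 ltac:(lra))) as H1.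
  pose proof (mono_from_deriv _ _ u (proj1 Hu) (Hd (-1)) (Hpos (-1) ltac:(lra))) as H2.
  cbv beta in H1, H2. simpl AT in H1, H2. rewrite AT_QN, atan_0 in H1, H2.
  replace (0 * (0 ^ 2) ^ S N / (2 * INR (S N) + 1) + 1 * (0 - 0 * QN N 0)) with 0 in H1 by (field; rewrite S_INR; lra).
  replace (0 * (0 ^ 2) ^ S N / (2 * INR (S N) + 1) + -1 * (0 - 0 * QN N 0)) with 0 in H2 by (field; rewrite S_INR; lra).
  apply Rabs_le. lra.
Qed.

Definition cat (k : nat) : R := (-1) ^ k / (2 * INR k + 1) ^ 2.

Lemma QN_term k : is_RInt (fun u => (-1) ^ k * (u ^ 2) ^ k / (2 * INR k + 1)) 0 1 (cat k).
Proof.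
  pose proof (pos_INR k).
  assert (H1 : is_RInt (fun u => (-1) ^ k * (u ^ 2) ^ k / (2 * INR k + 1)) 0 1
    ((fun u => (-1) ^ k / (2 * INR k + 1) ^ 2 * (u * (u ^ 2) ^ k)) 1 - (fun u => (-1) ^ k / (2 * INR k + 1) ^ 2 * (u * (u ^ 2) ^ k)) 0)).
  { apply (FTC (fun u => (-1) ^ k / (2 * INR k + 1) ^ 2 * (u * (u ^ 2) ^ k))). lra.
    - intros x _. eapply is_derive_val. apply (is_derive_scal (fun x => x * (x ^ 2) ^ k)). apply powd.
      change (scal ?a ?b) with (a * b). Rfix. field. lra.
    - intros x _. apply cont_of_derive. auto_derive. lra. }
  apply (is_RInt_val _ _ _ _ _ H1). cbv beta. unfold cat. replace (1 ^ 2) with 1 by ring. rewrite pow1.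
  field. lra.
Qed.

Lemma QN_int N : is_RInt (QN N) 0 1 (sum_n cat N).
Proof.
  induction N.
  - rewrite sum_O. eapply is_RInt_ext; [|apply (QN_term 0)]. intros x _. simpl. field.
  - rewrite sum_Sn. change (plus ?a ?b) with (a + b).
    eapply is_RInt_ext; [|apply (is_RInt_add _ _ _ _ _ _ IHN (QN_term (S N)))].
    intros x _. reflexivity.
Qed.

Lemma ex_RInt_q : ex_RInt q 0 1.
Proof. apply ex_RInt_cont. intros; apply q_cont. Qed.

Lemma q_err N u : 0 < u <= 1 -> Rabs (q u - QN N u) <= / (2 * INR (S N) + 1).
Proof.
  intros Hu. pose proof (pos_INR N).
  assert (E : q u - QN N u = (atan u - AT N u) / u).
  { unfold q. destruct (Req_EM_T u 0). lra. rewrite AT_QN. field. lra. }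
  rewrite E. unfold Rdiv. rewrite Rabs_mult, Rabs_inv, (Rabs_pos_eq u) by lra.
  pose proof (AT_err N u (conj (Rlt_le _ _ (proj1 Hu)) (proj2 Hu))).
  apply Rle_trans with (u * (u ^ 2) ^ S N / (2 * INR (S N) + 1) * / u).
  apply Rmult_le_compat_r. apply Rlt_le, Rinv_0_lt_compat; lra. exact H0.
  replace (u * (u ^ 2) ^ S N / (2 * INR (S N) + 1) * / u) with ((u ^ 2) ^ S N * / (2 * INR (S N) + 1)) by (field; rewrite S_INR; lra).
  rewrite <- (Rmult_1_l (/ (2 * INR (S N) + 1))) at 2.
  apply Rmult_le_compat_r. apply Rlt_le, Rinv_0_lt_compat. rewrite S_INR; lra.
  rewrite <- (pow1 (S N)). apply pow_incr. split. apply pow2_ge_0. nra.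
Qed.

Lemma int_close (f g : R -> R) a b If Ig e : a <= b -> is_RInt f a b If -> is_RInt g a b Ig ->
  (forall x, a <= x <= b -> Rabs (f x - g x) <= e) -> Rabs (If - Ig) <= (b - a) * e.
Proof.
  intros Hab Hf Hg Hb.
  pose proof (is_RInt_minus _ _ a b _ _ Hf Hg) as H.
  pose proof (norm_RInt_le_const_abs (V:=R_NormedModule) (fun y => minus (f y) (g y)) a b (minus If Ig) e) as H2.
  assert (H3 : forall x, Rmin a b <= x <= Rmax a b -> norm (minus (f x) (g x)) <= e).
  { intros x Hx. rewrite Rmin_left, Rmax_right in Hx by lra. apply Hb. exact Hx. }
  specialize (H2 H3 H).
  change (norm ?x) with (Rabs x) in H2. rewrite (Rabs_pos_eq (b - a)) in H2 by lra. exact H2.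
Qed.

Lemma lim_close (u : nat -> R) (l : R) (e : nat -> R) :
  (forall N, Rabs (u N - l) <= e N) -> is_lim_seq e 0 -> is_lim_seq u l.
Proof.
  intros H He.
  apply is_lim_seq_le_le with (fun N => l - e N) (fun N => l + e N).
  - intro N. specialize (H N). apply Rabs_le_between in H. lra.
  - replace (Finite l) with (Finite (l - 0)) by (f_equal; ring). apply is_lim_seq_minus'. apply is_lim_seq_const. exact He.
  - replace (Finite l) with (Finite (l + 0)) by (f_equal; ring). apply is_lim_seq_plus'. apply is_lim_seq_const. exact He.
Qed.

Lemma catalan_int : catalan = RInt q 0 1.
Proof.
  unfold catalan. apply is_series_unique. fold cat. apply is_series_of_lim.
  apply lim_close with (fun N => / (2 * INR (S N) + 1)).
  - intro N. rewrite Rabs_minus_sym.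
    pose proof (int_close q (QN N) 0 1 _ _ (/ (2 * INR (S N) + 1)) ltac:(lra) (RInt_correct_R _ _ _ ex_RInt_q) (QN_int N)) as H.
    rewrite Rminus_0_r, Rmult_1_l in H. apply H.
    intros x Hx. destruct (Req_EM_T x 0) as [->|hx].
    + unfold q. destruct (Req_EM_T 0 0); [|lra]. replace (QN N 0) with 1.
      rewrite Rminus_eq_0, Rabs_R0. apply Rlt_le, Rinv_0_lt_compat. rewrite S_INR; pose proof (pos_INR N); lra.
      clear. induction N. reflexivity. change (QN (S N) 0) with (QN N 0 + (-1) ^ (S N) * (0 ^ 2) ^ (S N) / (2 * INR (S N) + 1)).
      rewrite <- IHN. simpl pow. field. rewrite S_INR; pose proof (pos_INR N); lra.
    + apply q_err. lra.
  - apply is_lim_seq_incr_1 with (u := fun N => / (2 * INR N + 1)). 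
    replace (fun n => / (2 * INR (S n) + 1)) with (fun n => / (2 * INR (S n) + 1)) by reflexivity.
    apply (lim_inv_lin 2 1); lra.
Qed.


Lemma cos_pos_q s : 0 <= s <= PI/4 -> 0 < cos s.
Proof. intros; apply cos_gt_0; pose proof PI_RGT_0; lra. Qed.

Lemma tan_deriv x : 0 < cos x -> is_derive tan x (1 + tan x ^ 2).
Proof. intros Hc. unfold tan. auto_derive. lra. Rfix. field. lra. Qed.

Lemma tan_cont x : 0 < cos x -> continuous tan x.
Proof. intros Hc. apply cont_of_derive. exists (1 + tan x ^ 2). apply tan_deriv, Hc. Qed.

Lemma xtan_cont x : 0 < cos x -> continuous (fun s => s * tan s) x.
Proof. intros Hc. apply cont_of_derive. unfold tan. auto_derive. lra. Qed.

Lemma is_RInt_bounds (f : R -> R) a b a' b' (l : R) : is_RInt f a b l -> a = a' -> b = b' -> is_RInt f a' b' l.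
Proof. intros H <- <-. exact H. Qed.

Definition L := RInt (fun s => s * tan s) 0 (PI/4).
Definition T := RInt tan 0 (PI/4).

Lemma L_int : is_RInt (fun s => s * tan s) 0 (PI/4) L.
Proof.
  apply RInt_correct_R. apply ex_RInt_cont. intros z Hz.
  rewrite Rmin_left, Rmax_right in Hz by (pose proof PI_RGT_0; lra).
  apply xtan_cont, cos_pos_q; lra.
Qed.

Lemma T_int : is_RInt tan 0 (PI/4) T.
Proof.
  apply RInt_correct_R. apply ex_RInt_cont. intros z Hz.
  rewrite Rmin_left, Rmax_right in Hz by (pose proof PI_RGT_0; lra).
  apply tan_cont, cos_pos_q; lra.
Qed.

Lemma T_val : T = ln 2 / 2.
Proof.
  unfold T. apply is_RInt_unique.
  assert (H : is_RInt tan 0 (PI/4) ((fun s => - ln (cos s)) (PI/4) - (fun s => - ln (cos s)) 0)).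
  { apply (FTC (fun s => - ln (cos s))). pose proof PI_RGT_0; lra.
    - intros x Hx. pose proof (cos_pos_q x Hx). auto_derive. lra. unfold tan. Rfix. field. lra.
    - intros x Hx. apply tan_cont, cos_pos_q; lra. }
  apply (is_RInt_val _ _ _ _ _ H). cbv beta. rewrite cos_PI4, cos_0, ln_1.
  unfold Rdiv. rewrite Rmult_1_l, ln_Rinv by apply Rlt_sqrt2_0.
  assert (E : ln 2 = 2 * ln (sqrt 2)).
  { rewrite <- (sqrt_sqrt 2) at 1 by lra. rewrite ln_mult by apply Rlt_sqrt2_0. ring. }
  rewrite E. field.
Qed.

Definition c s := q (tan s).

Lemma q_mul v : q v * v = atan v.
Proof. unfold q. destruct (Req_EM_T v 0) as [->|h]. rewrite atan_0; ring. field. exact h. Qed.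

Lemma c_cont s : 0 < cos s -> continuous c s.
Proof. intros Hc. unfold c. apply (continuous_comp tan q). apply tan_cont, Hc. apply q_cont. Qed.

Lemma c_int1 : is_RInt c 0 (PI/4) (catalan - L).
Proof.
  pose proof PI_RGT_0.
  assert (H1 : is_RInt (fun y => scal (1 + tan y ^ 2) (q (tan y))) 0 (PI/4) (RInt q (tan 0) (tan (PI/4)))).
  { apply (is_RInt_comp q tan (fun y => 1 + tan y ^ 2)).
    - intros x _. apply q_cont.
    - intros x Hx. rewrite Rmin_left, Rmax_right in Hx by lra. pose proof (cos_pos_q x Hx).
      split. apply tan_deriv; lra. apply cont_of_derive. unfold tan. auto_derive. lra. }
  rewrite tan_0, tan_PI4, <- catalan_int in H1.
  pose proof (is_RInt_lin _ _ _ _ _ _ 1 1 H1 L_int) as H2.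
  eapply is_RInt_ext; [|eapply is_RInt_val; [exact H2|ring]].
  intros x Hx. rewrite Rmin_left, Rmax_right in Hx by lra. change (scal ?a ?b) with (a * b).
  unfold c. assert (E : x * tan x = q (tan x) * tan x * tan x) by (rewrite q_mul, atan_tan by lra; ring). cbv beta. rewrite E. Rfix. ring.
Qed.

Lemma h_int : is_RInt c (PI/4) (PI/2) (PI/2 * T - L).
Proof.
  pose proof PI_RGT_0.
  pose proof (is_RInt_lin _ _ _ _ _ _ (PI/2) 1 T_int L_int) as H1.
  apply (is_RInt_ext (fun s => PI/2 * tan s - 1 * (s * tan s)) (fun y => (PI/2 - y) * tan y)) in H1.
  2: { intros; Rfix; ring. }
  apply (is_RInt_swap (V:=R_NormedModule)) in H1.
  assert (H1' : is_RInt (fun y => (PI/2 - y) * tan y) (-1 * (PI/4) + PI/2) (-1 * (PI/2) + PI/2) (opp (PI / 2 * T - 1 * L))).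
  { eapply is_RInt_bounds. exact H1. field. field. }
  pose proof (is_RInt_comp_lin (V:=R_NormedModule) _ (-1) (PI/2) (PI/4) (PI/2) _ H1') as H2.
  apply (is_RInt_scal (V:=R_NormedModule) _ _ _ (-1)) in H2.
  eapply is_RInt_ext; [|eapply is_RInt_val; [exact H2|]].
  - intros x Hx. rewrite Rmin_left, Rmax_right in Hx by lra.
    change (scal ?a ?b) with (a * b).
    assert (0 < sin x) by (apply sin_gt_0; lra).
    assert (0 < cos x) by (apply cos_gt_0; lra).
    unfold c, q. destruct (Req_EM_T (tan x) 0) as [h|h].
    { exfalso. unfold tan in h. apply Rmult_integral in h. destruct h as [h|h]. lra.
      apply Rinv_neq_0_compat in h; auto. lra. }
    rewrite atan_tan by lra. unfold tan.
    replace (-1 * x + PI / 2) with (PI/2 - x) by ring. rewrite sin_shift, cos_shift. change (scal (-1) ?b) with (-1 * b). Rfix. field. lra.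
  - change (scal ?a ?b) with (a * b). change (opp ?a) with (- a). Rfix. ring.
Qed.

Lemma c_val y : 0 < y < PI/2 -> c y = y * cos y / sin y.
Proof.
  intros Hy. pose proof PI2_Rlt_PI.
  assert (0 < sin y) by (apply sin_gt_0; lra).
  assert (0 < cos y) by (apply cos_gt_0; lra).
  unfold c, q. destruct (Req_EM_T (tan y) 0) as [h|h].
  { exfalso. unfold tan in h. apply Rmult_integral in h. destruct h as [h|h]. lra.
    apply Rinv_neq_0_compat in h; auto. lra. }
  rewrite atan_tan by lra. unfold tan. field. lra.
Qed.

Lemma c_full : is_RInt c 0 (PI/2) (catalan - L + (PI/2 * T - L)).
Proof. exact (is_RInt_Chasles _ _ _ _ _ _ c_int1 h_int). Qed.

Lemma c_double : is_RInt c 0 (PI/2) (2 * (catalan - L) - 2 * L).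
Proof.
  pose proof PI_RGT_0.
  assert (Ha : is_RInt c (1/2 * 0 + 0) (1/2 * (PI/2) + 0) (catalan - L)).
  { eapply is_RInt_bounds. exact c_int1. field. field. }
  assert (Hb : is_RInt (fun s => s * tan s) (1/2 * 0 + 0) (1/2 * (PI/2) + 0) L).
  { eapply is_RInt_bounds. exact L_int. field. field. }
  apply (is_RInt_comp_lin (V:=R_NormedModule)) in Ha.
  apply (is_RInt_comp_lin (V:=R_NormedModule)) in Hb.
  pose proof (is_RInt_lin _ _ _ _ _ _ 2 2 Ha Hb) as H1.
  eapply is_RInt_ext; [|exact H1].
  intros y Hy. rewrite Rmin_left, Rmax_right in Hy by lra.
  change (scal ?a ?b) with (a * b). change (scal ?a ?b) with (a * b).
  cbv beta. replace (1/2 * y + 0) with (y/2) by field.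
  rewrite !c_val by lra.
  pose proof PI2_Rlt_PI.
  assert (0 < sin (y/2)) by (apply sin_gt_0; lra).
  assert (0 < cos (y/2)) by (apply cos_gt_0; lra).
  assert (Hs : sin y = 2 * sin (y/2) * cos (y/2)) by (rewrite <- sin_2a; f_equal; field).
  assert (Hc : cos y = cos (y/2) * cos (y/2) - sin (y/2) * sin (y/2)) by (rewrite <- cos_2a; f_equal; field).
  rewrite Hs, Hc. unfold tan. Rfix. field. lra.
Qed.

Lemma K_int : is_RInt Phiinf 0 (PI/2) (PI * T - 4 * L).
Proof.
  pose proof PI_RGT_0.
  pose proof (is_RInt_lin _ _ _ _ _ _ PI 4 T_int L_int) as H1.
  assert (Ha : is_RInt (fun t => PI * tan t - 4 * (t * tan t)) (1/2 * 0 + 0) (1/2 * (PI/2) + 0) (PI * T - 4 * L)).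
  { eapply is_RInt_bounds. exact H1. field. field. }
  apply (is_RInt_comp_lin (V:=R_NormedModule)) in Ha.
  eapply is_RInt_ext; [|exact Ha].
  intros y Hy. change (scal ?a ?b) with (a * b).
  cbv beta. replace (1/2 * y + 0) with (y/2) by field. unfold Phiinf, tan. Rfix. field.
  assert (0 < cos (y/2)) by (apply cos_gt_0; rewrite Rmin_left, Rmax_right in Hy by lra; pose proof PI2_Rlt_PI; lra). lra.
Qed.

Lemma K_val : RInt Phiinf 0 (PI/2) = PI * ln 2 - 2 * catalan.
Proof.
  rewrite (is_RInt_unique _ _ _ _ K_int).
  pose proof (RInt_unique_eq _ _ _ _ _ c_full c_double) as E.
  rewrite T_val in *. lra.
Qed.

Lemma B_lim : is_lim_seq B (4 * ln 2 - 8 * catalan / PI).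
Proof.
  replace (4 * ln 2 - 8 * catalan / PI) with (4 / PI * RInt Phiinf 0 (PI/2)).
  apply B_lim_K. rewrite K_val. field. pose proof PI_RGT_0; lra.
Qed.

Theorem corollaryB10 :
  is_series term
    (2 / PI * (16 * catalan + 4 * PI - 8 * PI * ln 2 - zeta3 - 8)).
Proof.
  apply is_series_of_lim.
  apply is_lim_seq_ext with (fun N => 8 * (1 - g (S N)) - 4 * B N - g (S N) * H3 N).
  { intro N. symmetry. apply sum_term_eq. }
  replace (2 / PI * (16 * catalan + 4 * PI - 8 * PI * ln 2 - zeta3 - 8)) with
    (8 * (1 - 2 / PI) - 4 * (4 * ln 2 - 8 * catalan / PI) - 2 / PI * zeta3)
    by (field; pose proof PI_RGT_0; lra).
  apply is_lim_seq_minus'. apply is_lim_seq_minus'.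
  - apply is_lim_seq_mult'. apply is_lim_seq_const. apply is_lim_seq_minus'. apply is_lim_seq_const. apply g_lim.
  - apply is_lim_seq_mult'. apply is_lim_seq_const. apply B_lim.
  - apply is_lim_seq_mult'. apply g_lim. apply H3_lim.
Qed.
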